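(* Let $G$ be a connected cograph with cotree $T$, let $w_1,\ldots,w_t$ be the children of the root of $T$, and for each $i$ let $G_i$ be the subgraph of $G$ induced by the leaves of the subtree of $T$ rooted at $w_i$. Then the family of sets $S_i=V(G)\setminus V(G_i)$, $i=1,\ldots,t$, is exactly the family of all minimal vertex separators of $G$.
   Context: A cograph is a graph that can be built from single vertices by repeatedly taking disjoint unions (label 0) and joins (label 1). The cotree of a cograph is the unique rooted tree whose leaves are the vertices of $G$, whose internal nodes are labelled 0 or 1 and each have at least two children, with labels alternating along every root-to-leaf path, such that two vertices are adjacent iff their lowest common ancestor is labelled 1; for a connected cograph the root is labelled 1. A vertex separator of a connected graph $G$ is a set $S\subset V(G)$ such that the subgraph induced on $V(G)\setminus S$ is disconnected; it is minimal if no proper subset of $S$ is a vertex separator.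
   Formalization: The family consists only of the sets $S_i=V(G)\setminus V(G_i)$ for those children $w_i$ of the root of T that are internal nodes, so the $S_i$ with $w_i$ a leaf are left out. The statement above fails without it. *)

(* Defs.v *)
From mathcomp Require Import all_boot.
Set Implicit Arguments. Unset Strict Implicit. Unset Printing Implicit Defensive.

Section Graphs.
Variable T : finType.
(* A simple graph on vertex set T is a symmetric irreflexive relation e. *)
Variable e : rel T.

Definition induced_rel (A : {set T}) : rel T :=
  fun x y => [&& x \in A, y \in A & e x y].

Definition connected_set (A : {set T}) : Prop :=
  A != set0 /\ forall x y, x \in A -> y \in A -> connect (induced_rel A) x y.

Definition disconnected_set (A : {set T}) : Prop :=
  exists x y, [/\ x \in A, y \in A & ~~ connect (induced_rel A) x y].

Definition connected_graph : Prop := connected_set setT.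

Definition vertex_separator (S : {set T}) : Prop := disconnected_set (~: S).

Definition minimal_vertex_separator (S : {set T}) : Prop :=
  vertex_separator S /\ forall S' : {set T}, S' \proper S -> ~ vertex_separator S'.
End Graphs.

(* Rooted trees with leaves labelled by vertices and internal nodes labelled
   by a bool (false = 0 = disjoint union, true = 1 = join). *)
Inductive cotree (T : Type) : Type :=
| CLeaf : T -> cotree T
| CNode : bool -> seq (cotree T) -> cotree T.
Arguments CLeaf {T}.
Arguments CNode {T}.

Fixpoint leaves (T : Type) (t : cotree T) : seq T :=
  match t with
  | CLeaf v => [:: v]
  | CNode _ cs => flatten (map (@leaves T) cs)
  end.

Definition is_node (T : Type) (t : cotree T) : bool :=
  if t is CNode _ _ then true else false.

Definition root_children (T : Type) (t : cotree T) : seq (cotree T) :=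
  if t is CNode _ cs then cs else [::].

Definition label_differs (T : Type) (b : bool) (c : cotree T) : bool :=
  if c is CNode b' _ then b' != b else true.

Fixpoint wf_cotree (T : Type) (t : cotree T) : bool :=
  match t with
  | CLeaf _ => true
  | CNode b cs => [&& 1 < size cs, all (label_differs b) cs & all (@wf_cotree T) cs]
  end.

(* lca_label t u v : the label of the lowest common ancestor of the leaves
   u and v in t (false if there is none / it is a leaf). *)
Fixpoint lca_label (T : eqType) (t : cotree T) (u v : T) : bool :=
  match t with
  | CLeaf _ => false
  | CNode b cs =>
      if has (fun c => (u \in leaves c) && (v \in leaves c)) cs
      then has (fun c => [&& u \in leaves c, v \in leaves c & lca_label c u v]) cs
      else b
  end.

Definition is_cotree_of (T : finType) (e : rel T) (t : cotree T) : Prop :=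
  [/\ uniq (leaves t), forall v : T, v \in leaves t, wf_cotree t &
      forall u v : T, u != v -> e u v = lca_label t u v].

(* Main.v *)
Require Import Defs.
From mathcomp Require Import all_boot.
Set Implicit Arguments. Unset Strict Implicit. Unset Printing Implicit Defensive.

Lemma conn_inv (T : finType) (r : rel T) (a : pred T) x y :
  (forall u v, a u -> r u v -> a v) -> connect r x y -> a x -> a y.
Proof.
move=> H /connectP[p Hp ->]; elim: p x Hp => [|z p IH] x //= /andP[Hxz Hp] Ha.
exact: IH Hp (H _ _ Ha Hxz).
Qed.

Section Tr.
Variable T : eqType.

Lemma mem_nth_flatten (ss : seq (seq T)) k x : x \in nth [::] ss k -> x \in flatten ss.
Proof.
elim: ss k => [|s ss IH] k; first by rewrite nth_nil.
case: k => [|k] /= H; rewrite mem_cat ?H //.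
by rewrite (IH k H) orbT.
Qed.

Lemma uniq_flatten_eq (ss : seq (seq T)) i j x : uniq (flatten ss) ->
  x \in nth [::] ss i -> x \in nth [::] ss j -> i = j.
Proof.
elim: ss i j => [|s ss IH] i j; first by rewrite nth_nil.
rewrite /= cat_uniq => /and3P[_ Hd Hu].
case: i => [|i]; case: j => [|j] //= Hi Hj.
- by case/negP: Hd; apply/hasP; exists x => //; exact: mem_nth_flatten Hj.
- by case/negP: Hd; apply/hasP; exists x => //; exact: mem_nth_flatten Hi.
- by congr S; exact: IH Hu Hi Hj.
Qed.

Lemma uniq_flatten_nth (ss : seq (seq T)) i : uniq (flatten ss) -> uniq (nth [::] ss i).
Proof.
elim: ss i => [|s ss IH] i; first by rewrite nth_nil.
rewrite /= cat_uniq => /and3P[H1 _ H2]; case: i => [|i] //=; exact: IH.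
Qed.

Lemma wf_ne (t : cotree T) : wf_cotree t -> exists v, v \in leaves t.
Proof.
move: t; fix IH 1; case => [v _ | b [|c cs]] /=.
- by exists v; exact: mem_head.
- by [].
- move=> /and3P[_ _ /andP[Hc _]]; case: (IH c Hc) => v Hv; exists v.
  by rewrite mem_cat Hv.
Qed.

Section Ch.
Variables (b : bool) (cs : seq (cotree T)) (d : cotree T).
Hypothesis Hu : uniq (flatten (map (@leaves T) cs)).

Lemma child_eq i j x : i < size cs -> j < size cs ->
  x \in leaves (nth d cs i) -> x \in leaves (nth d cs j) -> i = j.
Proof.
move=> Hi Hj; rewrite -(nth_map d [::] (@leaves T) Hi) -(nth_map d [::] (@leaves T) Hj).
exact: uniq_flatten_eq.
Qed.

Lemma child_of x : x \in flatten (map (@leaves T) cs) ->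
  exists2 i, i < size cs & x \in leaves (nth d cs i).
Proof.
case/flattenP => s /(nthP [::]) [i Hi Hci] Hx.
rewrite size_map in Hi; exists i => //.
by rewrite -(nth_map d [::] (@leaves T) Hi) Hci.
Qed.

Lemma child_sub i x : i < size cs -> x \in leaves (nth d cs i) ->
  x \in flatten (map (@leaves T) cs).
Proof.
move=> Hi; rewrite -(nth_map d [::] (@leaves T) Hi); exact: mem_nth_flatten.
Qed.

Lemma child_uniq i : i < size cs -> uniq (leaves (nth d cs i)).
Proof.
move=> Hi; rewrite -(nth_map d [::] (@leaves T) Hi); exact: uniq_flatten_nth.
Qed.

Lemma lca_cross i j u v : i < size cs -> j < size cs -> i != j ->
  u \in leaves (nth d cs i) -> v \in leaves (nth d cs j) ->
  lca_label (CNode b cs) u v = b.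
Proof.
move=> Hi Hj Hij Hui Hvj; rewrite /= ifN //.
apply/negP => /(has_nthP d) [k Hk /andP[Hu' Hv']].
have E1 := child_eq Hk Hi Hu' Hui; have E2 := child_eq Hk Hj Hv' Hvj.
by rewrite -E1 -E2 eqxx in Hij.
Qed.

Lemma lca_same i u v : i < size cs ->
  u \in leaves (nth d cs i) -> v \in leaves (nth d cs i) ->
  lca_label (CNode b cs) u v = lca_label (nth d cs i) u v.
Proof.
move=> Hi Hui Hvi; rewrite /= ifT; last by apply/(has_nthP d); exists i => //; rewrite Hui Hvi.
apply/(has_nthP d)/idP => [[k Hk /and3P[Hu' _ H]]|H].
  by rewrite -(child_eq Hk Hi Hu' Hui).
by exists i; rewrite // Hui Hvi H.
Qed.
End Ch.
End Tr.

Theorem lemma3 (T : finType) (e : rel T) (t : cotree T) :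
  symmetric e -> irreflexive e ->
  connected_graph e -> is_cotree_of e t ->
  forall S : {set T},
    minimal_vertex_separator e S <->
    (exists2 i, i < size (root_children t) &
       let w := nth t (root_children t) i in
       is_node w /\ S = ~: [set v | v \in leaves w]).
Proof.
move=> esym eirr conn [Huniq Hall Hwf Hlca] S.
case: t Huniq Hall Hwf Hlca => [a | b cs] Huniq Hall Hwf Hlca /=.
  split; last by case.
  move=> [[x [y [_ _ Hxy]]] _].
  have := Hall x; have := Hall y; rewrite /= !inE => /eqP Ey /eqP Ex.
  by rewrite Ex Ey connect0 in Hxy.
move: Hwf => /= /and3P[Hsz Hlab Hwfs].
have Hu : uniq (flatten (map (@leaves T) cs)) by [].
have childv : forall x, exists2 i, i < size cs & x \in leaves (nth (CNode b cs) cs i).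
  by move=> x; apply: (child_of (CNode b cs) (Hall x)).
have cross : forall i j u v, i < size cs -> j < size cs -> i != j ->
    u \in leaves (nth (CNode b cs) cs i) -> v \in leaves (nth (CNode b cs) cs j) -> e u v = b.
  move=> i j u v Hi Hj Hij Hui Hvj; rewrite Hlca; first exact: (lca_cross b Hu Hi Hj Hij Hui Hvj).
  apply/eqP => Euv; subst v; by rewrite (child_eq Hu Hi Hj Hui Hvj) eqxx in Hij.
have crossx : forall i u v, i < size cs -> u \in leaves (nth (CNode b cs) cs i) ->
    v \notin leaves (nth (CNode b cs) cs i) -> e u v = b.
  move=> i u v Hi Hui Hvi; case: (childv v) => j Hj Hvj.
  apply: (cross i j) => //; apply/eqP => Eij; subst j; by rewrite Hvj in Hvi.
have wfc : forall i, i < size cs -> wf_cotree (nth (CNode b cs) cs i).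
  by move=> i; apply/(all_nthP (CNode b cs)).
have nec : forall i, i < size cs -> exists v, v \in leaves (nth (CNode b cs) cs i).
  by move=> i Hi; apply: wf_ne; exact: wfc.
have bT : b = true.
  apply/negPn/negP => Hb; have Hbf : b = false by apply/negbTE.
  have [u Hu0] := nec 0 (ltn_trans (ltnSn 0) Hsz).
  have [v Hv1] := nec 1 Hsz.
  case: conn => _ /(_ u v (in_setT u) (in_setT v)) C.
  have := conn_inv (a := fun z => z \in leaves (nth (CNode b cs) cs 0)) _ C Hu0.
  case/(_ _)/Wrap => [p q Hp /and3P[_ _ Hpq]|].
    apply/negPn/negP => Hq.
    by rewrite (crossx 0 p q (ltn_trans (ltnSn 0) Hsz) Hp Hq) Hbf in Hpq.
  move=> Hv0; by have := child_eq Hu (ltn_trans (ltnSn 0) Hsz) Hsz Hv0 Hv1.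
have sep : forall i, i < size cs -> is_node (nth (CNode b cs) cs i) ->
    disconnected_set e [set v | v \in leaves (nth (CNode b cs) cs i)].
  move=> i Hi Hnode.
  have Hlabi : label_differs b (nth (CNode b cs) cs i) by apply/(all_nthP (CNode b cs)).
  have Hwi := wfc i Hi.
  have Hui := child_uniq (CNode b cs) Hu Hi.
  have Hsame := fun u v => lca_same b (d := CNode b cs) Hu (i := i) (u := u) (v := v) Hi.
  move: Hnode Hlabi Hwi Hui Hsame; case: (nth (CNode b cs) cs i) => [a'|b' cs'] // _ Hlabi Hwi Hui Hsame; rewrite /= in Hlabi Hwi.
  move: Hwi => /and3P[Hsz' _ Hwfs'].
  have Hb' : b' = false by move: Hlabi; rewrite bT; case: (b') => //=.
  have [u Hu0] := wf_ne ((all_nthP (CNode b cs) Hwfs') 0 (ltn_trans (ltnSn 0) Hsz')).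
  have [v Hv1] := wf_ne ((all_nthP (CNode b cs) Hwfs') 1 Hsz').
  have Hu0' := child_sub (ltn_trans (ltnSn 0) Hsz') Hu0.
  have Hv1' := child_sub Hsz' Hv1.
  exists u, v; split; rewrite ?inE //.
  apply/negP => C.
  have := conn_inv (a := fun z => z \in leaves (nth (CNode b cs) cs' 0)) _ C Hu0.
  case/(_ _)/Wrap => [p q Hp /and3P[Hp' Hq' Hpq]|].
    rewrite !inE in Hp' Hq'.
    apply/negPn/negP => Hq.
    have [j Hj Hqj] := child_of (CNode b cs) Hq'.
    have Hj0 : 0 != j by apply/eqP => E; subst j; rewrite Hqj in Hq.
    have Hpq' : p != q by apply/eqP => E; subst q; rewrite Hp in Hq.
    rewrite Hlca // Hsame // (lca_cross b' Hui (ltn_trans (ltnSn 0) Hsz') Hj Hj0 Hp Hqj) in Hpq.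
    by rewrite Hb' in Hpq.
  move=> Hv0; by have := child_eq Hui (ltn_trans (ltnSn 0) Hsz') Hsz' Hv0 Hv1.
have isym : forall A, symmetric (induced_rel e A).
  by move=> A p q; rewrite /induced_rel esym andbCA.
split.
  move=> [[x [y [Hx Hy Hxy]]] Hmin].
  have [i Hi Hxi] := childv x.
  have sub : forall z, z \in ~: S -> z \in leaves (nth (CNode b cs) cs i).
    move=> z Hz; apply/negPn/negP => Hzn.
    have exz : e x z by rewrite (crossx i x z Hi Hxi Hzn) bT.
    case/negP: Hxy.
    case: (boolP (y \in leaves (nth (CNode b cs) cs i))) => Hyi.
      have ezy : e z y by rewrite esym (crossx i y z Hi Hyi Hzn) bT.
      apply: (connect_trans (y := z)); apply: connect1; by rewrite /induced_rel ?Hx ?Hy ?Hz ?exz ?ezy.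
    have exy : e x y by rewrite (crossx i x y Hi Hxi Hyi) bT.
    by apply: connect1; rewrite /induced_rel Hx Hy exy.
  have Hyi := sub y Hy.
  have Hnode : is_node (nth (CNode b cs) cs i).
    move: Hxi Hyi Hxy; case: (nth (CNode b cs) cs i) => [a'|//] /=; rewrite !inE => /eqP -> /eqP ->.
    by rewrite connect0.
  exists i => //; split => //.
  have Hsub : ~: [set v | v \in leaves (nth (CNode b cs) cs i)] \subset S.
    apply/subsetP => z; rewrite !inE => Hz; apply/negPn/negP => HzS.
    by rewrite (sub z) ?inE in Hz.
  case: (eqVneq S (~: [set v | v \in leaves (nth (CNode b cs) cs i)])) => // Hne.
  exfalso; apply: (Hmin (~: [set v | v \in leaves (nth (CNode b cs) cs i)])).
    by rewrite properEneq eq_sym Hne Hsub.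
  by rewrite /vertex_separator setCK; apply: sep.
case=> i Hi [Hnode ->]; split.
  by rewrite /vertex_separator setCK; apply: sep.
move=> S' /properP[Hsub [z Hz HzS']] [x [y [Hx Hy Hxy]]].
have [a Ha] := nec i Hi.
have HaS' : a \in ~: S'.
  rewrite inE; apply/negP => HaS; have := subsetP Hsub a HaS; by rewrite !inE Ha.
have Hzn : z \notin leaves (nth (CNode b cs) cs i) by move: Hz; rewrite !inE.
have HzS'' : z \in ~: S' by rewrite inE.
have toz : forall w, w \in ~: S' -> connect (induced_rel e (~: S')) w z.
  move=> w Hw; case: (boolP (w \in leaves (nth (CNode b cs) cs i))) => Hwi.
    apply: connect1; by rewrite /induced_rel Hw HzS'' (crossx i w z Hi Hwi Hzn) bT.
  apply: (connect_trans (y := a)); apply: connect1.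
    by rewrite /induced_rel Hw HaS' esym (crossx i a w Hi Ha Hwi) bT.
  by rewrite /induced_rel HaS' HzS'' (crossx i a z Hi Ha Hzn) bT.
case/negP: Hxy; apply: (connect_trans (toz x Hx)).
by rewrite (sym_connect_sym (isym _)); apply: toz.
Qed.
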